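(* Let $(\lambda,\boldsymbol p)$ and $(\lambda',\boldsymbol p')$ be two distinct elements of $\nabla$ with $(\lambda',\boldsymbol p')\ge(\lambda,\boldsymbol p)$ componentwise (i.e. $\lambda'\ge\lambda$ and $p'_i\ge p_i$ for all $i$). If $k>m_+(\lambda',\boldsymbol p')$ and $\lambda'+p'_k>0$, then $f(k;\lambda',\boldsymbol p')>f(k;\lambda,\boldsymbol p)$.
   Context: $\nabla=\{(\lambda,\boldsymbol p):\lambda\ge0,\ 1\ge p_1\ge p_2\ge\dots\ge0,\ \sum_ip_i<\infty\}$. For $(\lambda,\boldsymbol p)\in\nabla$, $f(k;\lambda,\boldsymbol p)$ is the probability that $X+\sum_iB_i=k$ where $X\sim\mathrm{Poisson}(\lambda)$, $B_i\sim\mathrm{Bernoulli}(p_i)$ are independent, with $f(-1;\cdot)=0$. The leading mode $m_+(\lambda,\boldsymbol p)$ is the unique integer $k$ with $f(k-1;\lambda,\boldsymbol p)\le f(k;\lambda,\boldsymbol p)>f(k+1;\lambda,\boldsymbol p)$. $p'_k$ denotes the $k$-th component of $\boldsymbol p'$. *)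

(* Defs.v *)
From Stdlib Require Import Reals Lra Arith.
From Coquelicot Require Import Coquelicot.
Open Scope R_scope.

(* Convention: a sequence p = (p_1, p_2, ...) is represented by
   p : nat -> R with  p i = p_{i+1}  (0-based storage). *)

Definition in_nabla (lam : R) (p : nat -> R) : Prop :=
  0 <= lam /\ p 0%nat <= 1 /\ (forall i, p (S i) <= p i) /\
  (forall i, 0 <= p i) /\ ex_series p.

Definition poisson_pmf (lam : R) (j : nat) : R :=
  exp (- lam) * lam ^ j / INR (Factorial.fact j).

(* pmf of B_1 + ... + B_n, B_i ~ Bernoulli(p_i) independent *)
Fixpoint bern_sum_pmf (p : nat -> R) (n : nat) (j : nat) : R :=
  match n with
  | O => match j with O => 1 | S _ => 0 end
  | S n' => (1 - p n') * bern_sum_pmf p n' j +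
            match j with O => 0 | S j' => p n' * bern_sum_pmf p n' j' end
  end.

Definition f_trunc (lam : R) (p : nat -> R) (n k : nat) : R :=
  sum_f_R0 (fun j => poisson_pmf lam (k - j) * bern_sum_pmf p n j) k.

(* f(k; lam, p) = P(X + sum_i B_i = k), obtained as the limit n -> oo of
   the truncated sums (the infinite sum of Bernoullis converges a.s.
   since sum p_i < oo, and P(X + B_1..B_n = k) -> P(X + sum B_i = k)). *)
Definition fpmf (lam : R) (p : nat -> R) (k : nat) : R :=
  real (Lim_seq (fun n => f_trunc lam p n k)).

Definition f_pred (lam : R) (p : nat -> R) (k : nat) : R :=
  match k with O => 0 | S k' => fpmf lam p k' end.

Definition is_leading_mode (lam : R) (p : nat -> R) (m : nat) : Prop :=
  f_pred lam p m <= fpmf lam p m /\ fpmf lam p m > fpmf lam p (S m).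

(* Main.v *)
Require Import Defs.
From Stdlib Require Import Reals Lra Lia Arith Classical.
From Coquelicot Require Import Coquelicot.
Open Scope R_scope.

Definition sh (g : nat -> R) (j : nat) : R :=
  match j with O => 0 | S j' => g j' end.
Definition Tt (t : R) (g : nat -> R) (j : nat) : R := (1 - t) * g j + t * sh g j.
Definition upd (q : nat -> R) (i : nat) (v : R) : nat -> R :=
  fun x => if Nat.eqb x i then v else q x.
Definition SLC (g : nat -> R) : Prop :=
  forall a j, (a < j)%nat -> g a * g (S j) <= g (S a) * g j.
Definition ND (g : nat -> R) (K : nat) : Prop :=
  forall j, (j <= K)%nat -> sh g j <= g j.
Definition nonneg (g : nat -> R) : Prop := forall j, 0 <= g j.

Lemma sh_Tt t g j : sh (Tt t g) j = Tt t (sh g) j.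
Proof. destruct j; unfold Tt; simpl; ring. Qed.

Lemma Tt_comm a b g j : Tt a (Tt b g) j = Tt b (Tt a g) j.
Proof. unfold Tt at 1 3. rewrite !sh_Tt. unfold Tt. ring. Qed.

Lemma Tt_ext t g h j : (forall x, g x = h x) -> Tt t g j = Tt t h j.
Proof. intros E. unfold Tt. destruct j; simpl; rewrite ?E; auto. Qed.

Lemma ND_ext g h K : (forall x, g x = h x) -> ND g K -> ND h K.
Proof. intros E H j Hj. specialize (H j Hj). destruct j; simpl in *; rewrite <- !E; auto. Qed.

Lemma ND_le g K K' : (K' <= K)%nat -> ND g K -> ND g K'.
Proof. intros H N j Hj. apply N. lia. Qed.

Notation bern := bern_sum_pmf.

Lemma bern_S q n j : bern q (S n) j = Tt (q n) (bern q n) j.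
Proof. destruct j; unfold Tt; simpl; ring. Qed.

Lemma bern_0 q j : bern q 0 j = match j with O => 1 | S _ => 0 end.
Proof. reflexivity. Qed.

Lemma bern_ext q q' n j : (forall i, (i < n)%nat -> q i = q' i) -> bern q n j = bern q' n j.
Proof.
  revert j; induction n; intros j H; [reflexivity|].
  rewrite !bern_S. rewrite (H n) by lia. apply Tt_ext. intros x. apply IHn. intros; apply H; lia.
Qed.

Lemma Tt_0 g j : Tt 0 g j = g j.
Proof. unfold Tt; ring. Qed.

Lemma bern_T q i n j : (i < n)%nat -> bern q n j = Tt (q i) (bern (upd q i 0) n) j.
Proof.
  revert j; induction n; intros j H; [lia|].
  rewrite bern_S.
  rewrite (Tt_ext (q i) (bern (upd q i 0) (S n)) (Tt (upd q i 0 n) (bern (upd q i 0) n))) by (intros; apply bern_S).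
  destruct (Nat.eq_dec i n) as [->|Hne].
  - assert (Eu : upd q n 0 n = 0) by (unfold upd; now rewrite Nat.eqb_refl). rewrite Eu.
    apply Tt_ext. intros x. rewrite Tt_0. apply bern_ext. intros i Hi.
    unfold upd. destruct (Nat.eqb_spec i n); [lia|auto].
  - assert (Eu : upd q i 0 n = q n) by (unfold upd; destruct (Nat.eqb_spec n i); [lia|auto]). rewrite Eu.
    rewrite (Tt_ext (q n) (bern q n) (Tt (q i) (bern (upd q i 0) n))) by (intros; apply IHn; lia).
    apply Tt_comm.
Qed.

Lemma Tt_range t g j : 0 <= t <= 1 -> (forall x, 0 <= g x <= 1) -> 0 <= Tt t g j <= 1.
Proof.
  intros Ht Hg. unfold Tt. assert (0 <= sh g j <= 1) by (destruct j; simpl; auto; lra).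
  specialize (Hg j). nra.
Qed.

Lemma bern_range q n j : (forall i, 0 <= q i <= 1) -> 0 <= bern q n j <= 1.
Proof.
  intros Hq. revert j; induction n; intros j.
  - rewrite bern_0; destruct j; lra.
  - rewrite bern_S. apply Tt_range; auto.
Qed.

Lemma SLC_Tt t g : 0 <= t <= 1 -> nonneg g -> SLC g -> SLC (Tt t g).
Proof.
  intros Ht Hn HS a j Haj. unfold Tt.
  destruct j as [|j']; [lia|]. simpl sh.
  assert (X : g a * g (S (S j')) <= g (S a) * g (S j')) by (apply HS; lia).
  assert (t*t >= 0) by nra. assert ((1-t)*(1-t) >= 0) by nra. assert (t*(1-t) >= 0) by nra.
  destruct a as [|a'].
  - simpl sh.
    assert (0 <= g 1%nat * g j') by (apply Rmult_le_pos; auto).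
    assert (0 <= g 0%nat * g j') by (apply Rmult_le_pos; auto).
    assert (E: ((1 - t) * g 1%nat + t * g 0%nat) * ((1 - t) * g (S j') + t * g j')
      - ((1 - t) * g 0%nat + t * 0) * ((1 - t) * g (S (S j')) + t * g (S j'))
      = (1-t)*(1-t) * (g 1%nat * g (S j') - g 0%nat * g (S (S j'))) + t*(1-t) * (g 1%nat * g j')
        + t*t*(g 0%nat * g j')) by ring.
    assert (0 <= (1-t)*(1-t) * (g 1%nat * g (S j') - g 0%nat * g (S (S j')))) by (apply Rmult_le_pos; lra).
    assert (0 <= t*(1-t) * (g 1%nat * g j')) by (apply Rmult_le_pos; lra).
    assert (0 <= t*t*(g 0%nat * g j')) by (apply Rmult_le_pos; lra).
    lra.
  - simpl sh.
    assert (Y : g a' * g (S j') <= g (S a') * g j') by (apply HS; lia).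
    assert (Z : g a' * g (S (S j')) <= g (S (S a')) * g j').
    { assert (Z1 : g a' * g (S (S j')) <= g (S a') * g (S j')) by (apply HS; lia).
      destruct (Nat.eq_dec (S a') j') as [<-|Hne].
      + assert (g a' * g (S (S (S a'))) <= g (S a') * g (S (S a'))) by (apply HS; lia). lra.
      + assert (g (S a') * g (S j') <= g (S (S a')) * g j') by (apply HS; lia). lra. }
    assert (E: ((1 - t) * g (S (S a')) + t * g (S a')) * ((1 - t) * g (S j') + t * g j')
      - ((1 - t) * g (S a') + t * g a') * ((1 - t) * g (S (S j')) + t * g (S j'))
      = (1-t)*(1-t) * (g (S (S a')) * g (S j') - g (S a') * g (S (S j')))
        + t*(1-t) * (g (S (S a')) * g j' - g a' * g (S (S j')))
        + t*t*(g (S a') * g j' - g a' * g (S j'))) by ring.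
    assert (0 <= (1-t)*(1-t) * (g (S (S a')) * g (S j') - g (S a') * g (S (S j')))) by (apply Rmult_le_pos; lra).
    assert (0 <= t*(1-t) * (g (S (S a')) * g j' - g a' * g (S (S j')))) by (apply Rmult_le_pos; lra).
    assert (0 <= t*t*(g (S a') * g j' - g a' * g (S j'))) by (apply Rmult_le_pos; lra).
    lra.
Qed.

Lemma bern_SLC q n : (forall i, 0 <= q i <= 1) -> SLC (bern q n).
Proof.
  intros Hq. induction n.
  - intros a j H. rewrite !bern_0. destruct a; destruct j; lra.
  - intros a j H. rewrite !bern_S. apply SLC_Tt; auto.
    intros x; apply bern_range; auto.
Qed.


Lemma isd_plus f g x df dg : is_derive f x df -> is_derive g x dg ->
  is_derive (fun y => f y + g y) x (df + dg).
Proof. intros H1 H2. exact (is_derive_plus f g x df dg H1 H2). Qed.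
Lemma isd_minus f g x df dg : is_derive f x df -> is_derive g x dg ->
  is_derive (fun y => f y - g y) x (df - dg).
Proof. intros H1 H2. exact (is_derive_minus f g x df dg H1 H2). Qed.
Lemma isd_mult f g x df dg : is_derive f x df -> is_derive g x dg ->
  is_derive (fun y => f y * g y) x (df * g x + f x * dg).
Proof. intros H1 H2. exact (is_derive_mult f g x df dg H1 H2 Rmult_comm). Qed.
Lemma isd_const (a x : R) : is_derive (fun _ => a) x 0.
Proof. exact (is_derive_const a x). Qed.

Lemma isd_sum (F : R -> nat -> R) (dF : nat -> R) x N :
  (forall j, (j <= N)%nat -> is_derive (fun y => F y j) x (dF j)) ->
  is_derive (fun y => sum_f_R0 (F y) N) x (sum_f_R0 dF N).
Proof.
  induction N; intros H.
  - simpl. apply H. lia.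
  - simpl. apply isd_plus. apply IHN; intros; apply H; lia. apply H; lia.
Qed.

Definition Pg (mu : R) (g : nat -> R) (k : nat) : R :=
  sum_f_R0 (fun j => mu ^ (k - j) / INR (fact (k - j)) * g j) k.
Definition Cv (mu : R) (g : nat -> R) (k : nat) : R := exp (- mu) * Pg mu g k.

Lemma Pg_0k mu g : Pg mu g 0 = g 0%nat.
Proof. unfold Pg. simpl. field. Qed.

Lemma Pg_S mu g k : Pg mu g (S k) =
  sum_f_R0 (fun j => mu ^ (S (k - j)) / INR (fact (S (k - j))) * g j) k + g (S k).
Proof.
  unfold Pg. rewrite tech5. f_equal.
  - apply sum_eq. intros i Hi. replace (S k - i)%nat with (S (k - i)) by lia. reflexivity.
  - rewrite Nat.sub_diag. simpl. field.
Qed.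

Lemma deriv_mono mu n c : is_derive (fun x => x ^ (S n) / INR (fact (S n)) * c) mu
   (mu ^ n / INR (fact n) * c).
Proof.
  auto_derive; auto.
  replace (match n with 0%nat => 1 | S _ => INR n + 1 end) with (INR (S n)) by reflexivity.
  replace (fact n + n * fact n)%nat with (S n * fact n)%nat by reflexivity.
  rewrite mult_INR.
  assert (INR (fact n) <> 0) by apply INR_fact_neq_0.
  assert (INR (S n) <> 0) by (apply not_0_INR; lia).
  field. auto.
Qed.

Lemma Pg_deriv g k mu : is_derive (fun x => Pg x g k) mu (sh (fun k => Pg mu g k) k).
Proof.
  destruct k as [|k].
  - apply (is_derive_ext (fun _ => g 0%nat)). intros; rewrite Pg_0k; auto. apply isd_const.
  - apply (is_derive_ext (fun x => sum_f_R0 (fun j => x ^ (S (k - j)) / INR (fact (S (k - j))) * g j) k + g (S k))).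
    intros; rewrite Pg_S; auto.
    simpl sh. replace (Pg mu g k) with (Pg mu g k + 0) by ring.
    apply isd_plus; [|apply isd_const].
    unfold Pg. apply (isd_sum (fun y j => y ^ (S (k - j)) / INR (fact (S (k - j))) * g j)).
    intros j Hj. apply deriv_mono.
Qed.

Lemma Pg_at0 g k : Pg 0 g k = g k.
Proof.
  destruct k. apply Pg_0k. rewrite Pg_S.
  rewrite (sum_eq _ (fun _ => 0)). rewrite sum_cte. ring.
  intros i Hi. replace (k - i)%nat with (k - i)%nat by reflexivity. simpl pow. lra.
Qed.

Lemma INR_fact_pos n : 0 < INR (fact n).
Proof. apply lt_0_INR. apply lt_O_fact. Qed.

Lemma Pg_nonneg mu g k : 0 <= mu -> nonneg g -> 0 <= Pg mu g k.
Proof.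
  intros Hm Hg. unfold Pg. apply cond_pos_sum. intros n.
  apply Rmult_le_pos; [|apply Hg]. apply Rle_mult_inv_pos. apply pow_le; auto. apply INR_fact_pos.
Qed.

Lemma sum_ge_term An N j : (forall n, 0 <= An n) -> (j <= N)%nat -> An j <= sum_f_R0 An N.
Proof.
  intros H Hj. induction N.
  - replace j with 0%nat by lia. simpl; lra.
  - simpl. destruct (Nat.eq_dec j (S N)) as [->|Hne].
    + assert (0 <= sum_f_R0 An N) by (apply cond_pos_sum; auto). lra.
    + assert (An j <= sum_f_R0 An N) by (apply IHN; lia). specialize (H (S N)). lra.
Qed.

Lemma Pg_ge_term mu g k j : 0 <= mu -> nonneg g -> (j <= k)%nat ->
  mu ^ (k - j) / INR (fact (k - j)) * g j <= Pg mu g k.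
Proof.
  intros Hm Hg Hj. unfold Pg.
  apply (sum_ge_term (fun j => mu ^ (k - j) / INR (fact (k - j)) * g j)); auto.
  intros n. apply Rmult_le_pos; [|apply Hg]. apply Rle_mult_inv_pos. apply pow_le; auto. apply INR_fact_pos.
Qed.

Lemma Pg_lin mu a b g h k : Pg mu (fun j => a * g j + b * h j) k = a * Pg mu g k + b * Pg mu h k.
Proof.
  unfold Pg. rewrite !scal_sum. rewrite <- sum_plus. apply sum_eq. intros; ring.
Qed.

Lemma Pg_sh mu g k : Pg mu (sh g) k = sh (fun k => Pg mu g k) k.
Proof.
  destruct k. rewrite Pg_0k. reflexivity.
  unfold Pg at 1. rewrite decomp_sum by lia. simpl pred. simpl sh at 1. rewrite Rmult_0_r, Rplus_0_l.
  simpl sh. unfold Pg. apply sum_eq. intros; reflexivity.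
Qed.

Lemma Pg_ext mu g h k : (forall x, g x = h x) -> Pg mu g k = Pg mu h k.
Proof. intros E; unfold Pg; apply sum_eq; intros; rewrite E; auto. Qed.

Lemma Cv_Tt mu t g k : Cv mu (Tt t g) k = Tt t (fun k => Cv mu g k) k.
Proof.
  unfold Cv, Tt.
  rewrite Pg_lin, Pg_sh. destruct k; simpl; ring.
Qed.

Lemma Cv_ext mu g h k : (forall x, g x = h x) -> Cv mu g k = Cv mu h k.
Proof. intros E; unfold Cv; rewrite (Pg_ext mu g h); auto. Qed.

Lemma f_trunc_Cv mu q n k : f_trunc mu q n k = Cv mu (bern q n) k.
Proof.
  unfold f_trunc, Cv, Pg, poisson_pmf. rewrite scal_sum. apply sum_eq. intros; unfold Rdiv; ring.
Qed.

Lemma Cv_deriv g k mu : is_derive (fun x => Cv x g k) mu (sh (fun k => Cv mu g k) k - Cv mu g k).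
Proof.
  unfold Cv.
  assert (He : is_derive (fun x => exp (- x)) mu (- exp (- mu))) by (auto_derive; [exact I| ring]).
  pose proof (isd_mult _ _ mu _ _ He (Pg_deriv g k mu)) as H.
  replace (sh (fun k => exp (- mu) * Pg mu g k) k - exp (- mu) * Pg mu g k)
    with (- exp (- mu) * Pg mu g k + exp (- mu) * sh (fun k => Pg mu g k) k).
  exact H. destruct k; simpl; ring.
Qed.

Lemma Cv_nonneg mu g k : 0 <= mu -> nonneg g -> 0 <= Cv mu g k.
Proof. intros. unfold Cv. apply Rmult_le_pos. left; apply exp_pos. apply Pg_nonneg; auto. Qed.

Lemma Cv_at0 g k : Cv 0 g k = g k.
Proof. unfold Cv. rewrite Pg_at0, Ropp_0, exp_0. ring. Qed.


Lemma mono_deriv (f df : R -> R) (a b : R) : (forall x, is_derive f x (df x)) ->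
  (forall x, a <= x <= b -> 0 <= df x) -> a <= b -> f a <= f b.
Proof.
  intros Hd Hp Hab.
  destruct (MVT_gen f a b df) as [c [Hc E]].
  - intros; apply Hd.
  - intros x _. apply derivable_continuous_pt. exists (df x). apply is_derive_Reals. apply Hd.
  - rewrite Rmin_left in Hc by lra. rewrite Rmax_right in Hc by lra.
    specialize (Hp c Hc). nra.
Qed.

Lemma smono_deriv (f df : R -> R) (a b : R) : (forall x, is_derive f x (df x)) ->
  (forall x, a <= x <= b -> 0 < df x) -> a < b -> f a < f b.
Proof.
  intros Hd Hp Hab.
  destruct (MVT_gen f a b df) as [c [Hc E]].
  - intros; apply Hd.
  - intros x _. apply derivable_continuous_pt. exists (df x). apply is_derive_Reals. apply Hd.
  - rewrite Rmin_left in Hc by lra. rewrite Rmax_right in Hc by lra.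
    specialize (Hp c Hc). nra.
Qed.

Lemma SLC_Pg mu g : 0 <= mu -> nonneg g -> SLC g -> SLC (fun k => Pg mu g k).
Proof.
  intros Hmu Hn HS.
  set (P := fun x k => Pg x g k).
  assert (HP : forall x k, 0 <= x -> 0 <= P x k) by (intros; apply Pg_nonneg; auto).
  assert (main : forall s a j, (a + j <= s)%nat -> (a < j)%nat -> forall x, 0 <= x ->
     0 <= P x (S a) * P x j - P x a * P x (S j)).
  { induction s; intros a j Hs Haj x Hx; [lia|].
    destruct j as [|j']; [lia|].
    set (dQ := fun x => (P x a * P x (S j') + P x (S a) * sh (P x) (S j'))
                        - (sh (P x) a * P x (S (S j')) + P x a * P x (S j'))).
    assert (Hd : forall y, is_derive (fun x => P x (S a) * P x (S j') - P x a * P x (S (S j'))) y (dQ y)).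
    { intros y. unfold dQ. apply isd_minus; apply isd_mult; apply Pg_deriv. }
    assert (H0 : 0 <= P 0 (S a) * P 0 (S j') - P 0 a * P 0 (S (S j'))).
    { unfold P; rewrite !Pg_at0. specialize (HS a (S j') Haj). lra. }
    enough (P 0 (S a) * P 0 (S j') - P 0 a * P 0 (S (S j')) <=
            P x (S a) * P x (S j') - P x a * P x (S (S j'))) by lra.
    apply (mono_deriv (fun x => P x (S a) * P x (S j') - P x a * P x (S (S j'))) dQ); auto.
    intros y [Hy _]. unfold dQ. simpl sh.
    assert (T1 : 0 <= P y (S a) * P y j' - P y a * P y (S j')).
    { destruct (Nat.eq_dec a j') as [->|Hne]. lra. apply IHs; auto; lia. }
    assert (T2 : 0 <= P y a * P y (S j') - sh (P y) a * P y (S (S j'))).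
    { destruct a as [|a']. simpl sh. assert (0 <= P y 0%nat * P y (S j')) by (apply Rmult_le_pos; auto). lra.
      simpl sh. apply IHs; auto; lia. }
    lra. }
  intros a j Haj. specialize (main (a + j)%nat a j (le_n _) Haj mu Hmu). unfold P in main. lra.
Qed.

Lemma SLC_Cv mu g : 0 <= mu -> nonneg g -> SLC g -> SLC (fun k => Cv mu g k).
Proof.
  intros Hmu Hn HS a j Haj. pose proof (SLC_Pg mu g Hmu Hn HS a j Haj) as H. simpl in H.
  unfold Cv. assert (0 < exp (- mu) * exp (- mu)) by (pose proof (exp_pos (- mu)); nra).
  replace (exp (- mu) * Pg mu g a * (exp (- mu) * Pg mu g (S j))) with
    ((exp (- mu) * exp (- mu)) * (Pg mu g a * Pg mu g (S j))) by ring.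
  replace (exp (- mu) * Pg mu g (S a) * (exp (- mu) * Pg mu g j)) with
    ((exp (- mu) * exp (- mu)) * (Pg mu g (S a) * Pg mu g j)) by ring.
  apply Rmult_le_compat_l; lra.
Qed.

Lemma ND_Pg_mono mu0 mu g K : ND (fun k => Pg mu0 g k) K -> mu0 <= mu -> ND (fun k => Pg mu g k) K.
Proof.
  intros HN Hmu.
  assert (main : forall j, (j <= K)%nat -> forall x, mu0 <= x -> sh (fun k => Pg x g k) j <= Pg x g j).
  { induction j; intros Hj x Hx.
    - simpl. rewrite Pg_0k. specialize (HN 0%nat Hj). simpl in HN. rewrite Pg_0k in HN. auto.
    - simpl sh. specialize (HN (S j) Hj). simpl in HN.
      enough (Pg mu0 g (S j) - Pg mu0 g j <= Pg x g (S j) - Pg x g j) by lra.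
      apply (mono_deriv (fun x => Pg x g (S j) - Pg x g j) (fun x => Pg x g j - sh (fun k => Pg x g k) j)); auto.
      + intros y. apply isd_minus. apply (Pg_deriv g (S j) y). apply Pg_deriv.
      + intros y [Hy _]. assert (sh (fun k => Pg y g k) j <= Pg y g j) by (apply IHj; auto; lia). lra. }
  intros j Hj. apply main; auto.
Qed.

Lemma sh_scal c g j : sh (fun k => c * g k) j = c * sh g j.
Proof. destruct j; simpl; ring. Qed.

Lemma ND_Cv_mono mu0 mu g K : ND (fun k => Cv mu0 g k) K -> mu0 <= mu -> ND (fun k => Cv mu g k) K.
Proof.
  intros HN Hmu.
  assert (HN' : ND (fun k => Pg mu0 g k) K).
  { intros j Hj. specialize (HN j Hj). unfold Cv in HN. rewrite sh_scal in HN.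
    pose proof (exp_pos (- mu0)). apply Rmult_le_reg_l with (exp (- mu0)); auto. }
  pose proof (ND_Pg_mono mu0 mu g K HN' Hmu) as H.
  intros j Hj. specialize (H j Hj). unfold Cv. rewrite sh_scal.
  apply Rmult_le_compat_l; auto. left; apply exp_pos.
Qed.

Lemma U_lemma g k : nonneg g -> SLC g -> 0 < g (S k) -> g k <= g (S k) -> ND g (S k).
Proof.
  intros Hn HS Hp Hle j Hj. destruct j as [|a]. simpl; apply Hn.
  simpl. destruct (Nat.eq_dec a k) as [->|Hne]; auto.
  assert (H1 : g a * g (S k) <= g (S a) * g k) by (apply HS; lia).
  assert (H2 : g (S a) * g k <= g (S a) * g (S k)) by (apply Rmult_le_compat_l; auto).
  apply Rmult_le_reg_r with (g (S k)); auto. lra.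
Qed.

Lemma ND_T G K a b : nonneg G -> SLC G -> ND (Tt a G) K -> 0 <= a -> a <= b -> b <= 1 -> ND (Tt b G) K.
Proof.
  intros Hn HS HN Ha Hab Hb.
  assert (S1 : forall j, (j < K)%nat -> sh G j <= G j).
  { intros j Hj. destruct j as [|j0]. simpl; apply Hn. simpl.
    destruct (Rle_dec (G j0) (G (S j0))) as [|Hlt]; auto. exfalso. apply Rnot_le_lt in Hlt.
    assert (Hd : G (S (S j0)) <= G (S j0)).
    { destruct (Rle_dec (G (S (S j0))) (G (S j0))) as [|H']; auto. apply Rnot_le_lt in H'.
      assert (ND G (S (S j0))) as HU. apply U_lemma; auto. pose proof (Hn (S j0)); lra. lra.
      specialize (HU (S j0) ltac:(lia)). simpl in HU. lra. }
    destruct (Req_dec a 0) as [->|Ha0].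
    - specialize (HN (S j0) ltac:(lia)). rewrite sh_Tt in HN. unfold Tt in HN. simpl in HN. lra.
    - specialize (HN (S (S j0)) Hj). rewrite sh_Tt in HN. unfold Tt in HN. simpl in HN.
      assert (0 < a) by lra. nra. }
  intros j Hj. rewrite sh_Tt. specialize (HN j Hj). rewrite sh_Tt in HN. unfold Tt in *.
  assert (Y : sh (sh G) j <= sh G j).
  { destruct j as [|j']. simpl; lra. simpl. apply S1; lia. }
  destruct (Req_dec a 1) as [->|Ha1].
  - replace b with 1 by lra. lra.
  - assert (E : (1 - a) * (((1 - b) * G j + b * sh G j) - ((1 - b) * sh G j + b * sh (sh G) j)) =
       (1 - b) * (((1 - a) * G j + a * sh G j) - ((1 - a) * sh G j + a * sh (sh G) j))
       + (b - a) * (sh G j - sh (sh G) j)) by ring.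
    assert (0 <= (1 - b) * (((1 - a) * G j + a * sh G j) - ((1 - a) * sh G j + a * sh (sh G) j)))
      by (apply Rmult_le_pos; lra).
    assert (0 <= (b - a) * (sh G j - sh (sh G) j)) by (apply Rmult_le_pos; lra).
    assert (0 < 1 - a) by lra.
    assert (0 <= ((1 - b) * G j + b * sh G j) - ((1 - b) * sh G j + b * sh (sh G) j)).
    { apply Rmult_le_reg_l with (1 - a); auto. lra. }
    lra.
Qed.


Lemma bern_nonneg q n : (forall i, 0 <= q i <= 1) -> nonneg (bern q n).
Proof. intros H j. apply bern_range; auto. Qed.

Lemma Cvb_nonneg mu q n : 0 <= mu -> (forall i, 0 <= q i <= 1) -> nonneg (fun k => Cv mu (bern q n) k).
Proof. intros. intros k. apply Cv_nonneg; auto. apply bern_nonneg; auto. Qed.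

Lemma Cvb_SLC mu q n : 0 <= mu -> (forall i, 0 <= q i <= 1) -> SLC (fun k => Cv mu (bern q n) k).
Proof. intros. apply SLC_Cv; auto. apply bern_nonneg; auto. apply bern_SLC; auto. Qed.

Lemma upd_range q i v : (forall i, 0 <= q i <= 1) -> 0 <= v <= 1 -> forall x, 0 <= upd q i v x <= 1.
Proof. intros H Hv x. unfold upd. destruct (Nat.eqb x i); auto. Qed.

Lemma Cv_bern_T mu q n i k : (i < n)%nat ->
  Cv mu (bern q n) k = Tt (q i) (fun k => Cv mu (bern (upd q i 0) n) k) k.
Proof.
  intros H. rewrite (Cv_ext mu _ (Tt (q i) (bern (upd q i 0) n))) by (intros; apply bern_T; auto).
  apply Cv_Tt.
Qed.

Lemma upd_upd q i v w x : upd (upd q i v) i w x = upd q i w x.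
Proof. unfold upd. destruct (Nat.eqb x i); auto. Qed.

Lemma upd_eq q i v : upd q i v i = v.
Proof. unfold upd. now rewrite Nat.eqb_refl. Qed.

Lemma raise_coord mu q n i v K : 0 <= mu -> (forall i, 0 <= q i <= 1) -> (i < n)%nat ->
  q i <= v <= 1 ->
  ND (fun k => Cv mu (bern q n) k) K -> ND (fun k => Cv mu (bern (upd q i v) n) k) K.
Proof.
  intros Hmu Hq Hi Hv HN.
  set (G := fun k => Cv mu (bern (upd q i 0) n) k).
  assert (Hr0 : forall x, 0 <= upd q i 0 x <= 1) by (apply upd_range; auto; lra).
  assert (HN1 : ND (Tt (q i) G) K).
  { apply (ND_ext (fun k => Cv mu (bern q n) k)); [|exact HN]. intros x. apply Cv_bern_T; auto. }
  assert (HN2 : ND (Tt v G) K).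
  { apply (ND_T G K (q i) v); auto. apply Cvb_nonneg; auto. apply Cvb_SLC; auto.
    apply (Hq i). lra. lra. }
  apply (ND_ext (Tt v G)); [|exact HN2]. intros x.
  rewrite (Cv_bern_T mu (upd q i v) n i x Hi). rewrite upd_eq. apply Tt_ext. intros y.
  unfold G. apply Cv_ext. intros z. apply bern_ext. intros; rewrite upd_upd; auto.
Qed.

Definition mix (a b : nat -> R) (N : nat) : nat -> R := fun i => if Nat.ltb i N then a i else b i.

Lemma mix_S a b N x : upd (mix a b N) N (a N) x = mix a b (S N) x.
Proof.
  unfold upd, mix. destruct (Nat.eqb_spec x N); destruct (Nat.ltb_spec x N); destruct (Nat.ltb_spec x (S N));
   subst; auto; lia.
Qed.

Lemma mix_range a b N : (forall i, 0 <= a i <= 1) -> (forall i, 0 <= b i <= 1) -> forall x, 0 <= mix a b N x <= 1.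
Proof. intros Ha Hb x. unfold mix. destruct (Nat.ltb x N); auto. Qed.

Lemma KL_n lam' p' n m mu q : (forall i, 0 <= p' i <= 1) ->
  Cv lam' (bern p' n) (S m) < Cv lam' (bern p' n) m -> 0 <= mu <= lam' ->
  (forall i, 0 <= q i <= p' i) -> forall k, (m <= k)%nat ->
  Cv mu (bern q n) (S k) <= Cv mu (bern q n) k.
Proof.
  intros Hp Hgap Hmu Hq k Hk.
  assert (Hq1 : forall i, 0 <= q i <= 1) by (intros i; specialize (Hp i); specialize (Hq i); lra).
  destruct (Rle_dec (Cv mu (bern q n) (S k)) (Cv mu (bern q n) k)) as [|Hc]; auto. exfalso.
  apply Rnot_le_lt in Hc.
  assert (HND : ND (fun k => Cv mu (bern q n) k) (S m)).
  { apply (ND_le _ (S k)). lia. apply U_lemma. apply Cvb_nonneg; auto; lra. apply Cvb_SLC; auto; lra.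
    pose proof (Cv_nonneg mu (bern q n) k ltac:(lra) (bern_nonneg q n Hq1)). lra. lra. }
  assert (Hall : forall N, (N <= n)%nat -> ND (fun k => Cv mu (bern (mix p' q N) n) k) (S m)).
  { induction N; intros HN.
    - apply (ND_ext (fun k => Cv mu (bern q n) k)); [|exact HND]. intros x. apply Cv_ext. intros y.
      apply bern_ext. intros; unfold mix; simpl; auto.
    - apply (ND_ext (fun k => Cv mu (bern (upd (mix p' q N) N (p' N)) n) k)).
      + intros x. apply Cv_ext. intros y. apply bern_ext. intros; apply mix_S.
      + apply raise_coord; [lra | apply mix_range; auto | lia | | apply IHN; lia].
        unfold mix. rewrite (proj2 (Nat.ltb_ge N N)) by lia. specialize (Hq N); specialize (Hp N); lra. }
  specialize (Hall n (le_n n)).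
  assert (H2 : ND (fun k => Cv mu (bern p' n) k) (S m)).
  { apply (ND_ext (fun k => Cv mu (bern (mix p' q n) n) k)); [|exact Hall]. intros x. apply Cv_ext.
    intros y. apply bern_ext. intros i Hi. unfold mix. rewrite (proj2 (Nat.ltb_lt i n) Hi). auto. }
  apply (ND_Cv_mono mu lam') in H2; [|lra].
  specialize (H2 (S m) (le_n _)). simpl in H2. lra.
Qed.

Lemma M_n lam' p' n m mu mu' q q' : (forall i, 0 <= p' i <= 1) ->
  Cv lam' (bern p' n) (S m) < Cv lam' (bern p' n) m -> 0 <= mu -> mu <= mu' -> mu' <= lam' ->
  (forall i, 0 <= q i <= q' i) -> (forall i, q' i <= p' i) -> forall k, (m <= k)%nat ->
  Cv mu (bern q n) (S k) <= Cv mu' (bern q' n) (S k).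
Proof.
  intros Hp Hgap Hmu Hmu' Hmu'' Hq Hq' k Hk.
  assert (Hall : forall N, (N <= n)%nat -> Cv mu (bern q n) (S k) <= Cv mu (bern (mix q' q N) n) (S k)).
  { induction N; intros HN.
    - right. apply Cv_ext. intros y. apply bern_ext. intros; unfold mix; simpl; auto.
    - eapply Rle_trans. apply IHN; lia.
      rewrite (Cv_bern_T mu (mix q' q N) n N) by lia.
      rewrite (Cv_bern_T mu (mix q' q (S N)) n N) by lia.
      set (G := fun k => Cv mu (bern (upd (mix q' q N) N 0) n) k).
      rewrite (Tt_ext _ (fun k => Cv mu (bern (upd (mix q' q (S N)) N 0) n) k) G).
      2:{ intros x. unfold G. apply Cv_ext. intros y. apply bern_ext. intros i _.
          unfold upd, mix. destruct (Nat.eqb_spec i N); auto.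
          destruct (Nat.ltb_spec i N); destruct (Nat.ltb_spec i (S N)); auto; lia. }
      assert (HG : G (S k) <= G k).
      { unfold G. apply (KL_n lam' p' n m); auto. lra. intros i. unfold upd, mix.
        destruct (Nat.eqb i N). specialize (Hp i); lra.
        destruct (Nat.ltb i N); specialize (Hq i); specialize (Hq' i); lra. }
      unfold mix. rewrite (proj2 (Nat.ltb_ge N N)) by lia. rewrite (proj2 (Nat.ltb_lt N (S N))) by lia.
      unfold Tt. simpl sh. specialize (Hq N). nra. }
  specialize (Hall n (le_n n)).
  rewrite (Cv_ext mu (bern (mix q' q n) n) (bern q' n)) in Hall.
  2:{ intros y. apply bern_ext. intros i Hi. unfold mix. rewrite (proj2 (Nat.ltb_lt i n) Hi). auto. }
  eapply Rle_trans. apply Hall.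
  apply (mono_deriv (fun x => Cv x (bern q' n) (S k)) (fun x => sh (fun k => Cv x (bern q' n) k) (S k) - Cv x (bern q' n) (S k))).
  - intros x. apply Cv_deriv.
  - intros x Hx. simpl sh. assert (Cv x (bern q' n) (S k) <= Cv x (bern q' n) k).
    { apply (KL_n lam' p' n m); auto. lra. intros i. specialize (Hq i); specialize (Hq' i); lra. }
    lra.
  - auto.
Qed.


Definition valid (q : nat -> R) : Prop := (forall i, 0 <= q i <= 1) /\ ex_series q.

Definition bq (q : nat -> R) (j : nat) : R := real (Lim_seq (fun n => bern q n j)).

Lemma ex_series_dom (q p' : nat -> R) : (forall x, 0 <= q x <= p' x) -> ex_series p' -> ex_series q.
Proof.
  intros H Hs. apply (ex_series_le q p'); auto. intros n. change (norm (q n)) with (Rabs (q n)).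
  specialize (H n). rewrite Rabs_pos_eq; lra.
Qed.

Lemma sum_telesc (u : nat -> R) N : sum_f_R0 (fun i => u (S i) - u i) N = u (S N) - u 0%nat.
Proof. induction N; simpl; [ring|]. rewrite IHN. ring. Qed.

Lemma bern_lim q j : valid q -> is_lim_seq (fun n => bern q n j) (bq q j).
Proof.
  intros [Hq Hs].
  set (d := fun i => bern q (S i) j - bern q i j).
  assert (Hd : ex_series d).
  { apply (ex_series_le d q); auto. intros n. change (norm (d n)) with (Rabs (d n)).
    unfold d. rewrite bern_S. unfold Tt.
    assert (0 <= sh (bern q n) j <= 1) by (destruct j; simpl; [lra| apply bern_range; auto]).
    pose proof (bern_range q n j Hq). specialize (Hq n).
    replace ((1 - q n) * bern q n j + q n * sh (bern q n) j - bern q n j) with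
      (q n * (sh (bern q n) j - bern q n j)) by ring.
    rewrite Rabs_mult, Rabs_pos_eq by lra.
    assert (Rabs (sh (bern q n) j - bern q n j) <= 1) by (apply Rabs_le; lra).
    nra. }
  destruct Hd as [l Hl].
  assert (H1 : is_lim_seq (sum_n d) l) by exact Hl.
  assert (H2 : is_lim_seq (fun N => bern q (S N) j) (l + bern q 0 j)).
  { apply (is_lim_seq_ext (fun N => sum_n d N + bern q 0 j)).
    intros N. rewrite sum_n_Reals. unfold d. rewrite (sum_telesc (fun i => bern q i j)). ring.
    apply is_lim_seq_plus'; auto. apply is_lim_seq_const. }
  apply (is_lim_seq_incr_1 (fun n => bern q n j)) in H2.
  unfold bq. rewrite (is_lim_seq_unique _ _ H2). exact H2.
Qed.

Lemma lim_sum (c : nat -> R) (u : nat -> nat -> R) (l : nat -> R) K :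
  (forall j, is_lim_seq (fun n => u n j) (l j)) ->
  is_lim_seq (fun n => sum_f_R0 (fun j => c j * u n j) K) (sum_f_R0 (fun j => c j * l j) K).
Proof.
  intros H. induction K.
  - simpl. apply is_lim_seq_mult'. apply is_lim_seq_const. apply H.
  - simpl. apply is_lim_seq_plus'; auto. apply is_lim_seq_mult'. apply is_lim_seq_const. apply H.
Qed.

Lemma lim_Cv (u : nat -> nat -> R) (l : nat -> R) mu k :
  (forall j, is_lim_seq (fun n => u n j) (l j)) -> is_lim_seq (fun n => Cv mu (u n) k) (Cv mu l k).
Proof.
  intros H. unfold Cv. apply is_lim_seq_mult'. apply is_lim_seq_const.
  unfold Pg. apply (lim_sum (fun j => mu ^ (k - j) / INR (fact (k - j)))). auto.
Qed.

Lemma fpmf_Cv mu q k : valid q -> fpmf mu q k = Cv mu (bq q) k.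
Proof.
  intros Hv. unfold fpmf.
  assert (H : is_lim_seq (fun n => f_trunc mu q n k) (Cv mu (bq q) k)).
  { apply (is_lim_seq_ext (fun n => Cv mu (bern q n) k)). intros; rewrite f_trunc_Cv; auto.
    apply lim_Cv. intros j; apply bern_lim; auto. }
  rewrite (is_lim_seq_unique _ _ H). reflexivity.
Qed.

Lemma ftrunc_lim mu q k : valid q -> is_lim_seq (fun n => f_trunc mu q n k) (fpmf mu q k).
Proof.
  intros Hv. rewrite fpmf_Cv by auto.
  apply (is_lim_seq_ext (fun n => Cv mu (bern q n) k)). intros; rewrite f_trunc_Cv; auto.
  apply lim_Cv. intros j; apply bern_lim; auto.
Qed.

Lemma bq_nonneg q : valid q -> nonneg (bq q).
Proof.
  intros Hv j. pose proof (bern_lim q j Hv) as H.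
  assert (Hle := is_lim_seq_le (fun _ => 0) (fun n => bern q n j) 0 (bq q j)).
  simpl in Hle. apply Hle; auto. intros n; apply bern_range; apply Hv. apply is_lim_seq_const.
Qed.

Lemma bq_SLC q : valid q -> SLC (bq q).
Proof.
  intros Hv a j Haj.
  assert (Hle := is_lim_seq_le (fun n => bern q n a * bern q n (S j)) (fun n => bern q n (S a) * bern q n j)
     (bq q a * bq q (S j)) (bq q (S a) * bq q j)).
  simpl in Hle. apply Hle.
  - intros n. apply bern_SLC; auto. apply Hv.
  - apply is_lim_seq_mult'; apply bern_lim; auto.
  - apply is_lim_seq_mult'; apply bern_lim; auto.
Qed.

Lemma valid_upd q i v : valid q -> 0 <= v <= q i -> valid (upd q i v).
Proof.
  intros [Hq Hs] Hv. split. apply upd_range; auto. specialize (Hq i); lra.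
  apply (ex_series_dom _ q); auto. intros x. unfold upd. destruct (Nat.eqb_spec x i).
  subst; lra. split; [apply Hq | lra].
Qed.

Lemma bq_T q i j : valid q -> bq q j = Tt (q i) (bq (upd q i 0)) j.
Proof.
  intros Hv.
  assert (Hv0 : valid (upd q i 0)) by (apply valid_upd; auto; pose proof (proj1 Hv i); lra).
  pose proof (bern_lim q j Hv) as H1.
  assert (H2 : is_lim_seq (fun n => bern q n j) (Tt (q i) (bq (upd q i 0)) j)).
  { apply (is_lim_seq_ext_loc (fun n => Tt (q i) (bern (upd q i 0) n) j)).
    exists (S i). intros n Hn. symmetry. apply bern_T. lia.
    unfold Tt. apply is_lim_seq_plus'; apply is_lim_seq_mult'; try apply is_lim_seq_const.
    apply bern_lim; auto. destruct j; simpl. apply is_lim_seq_const. apply bern_lim; auto. }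
  apply is_lim_seq_unique in H1. apply is_lim_seq_unique in H2. rewrite H1 in H2. injection H2. auto.
Qed.

Lemma bq_ext q q' j : (forall x, q x = q' x) -> bq q j = bq q' j.
Proof. intros E. unfold bq. rewrite (Lim_seq_ext _ (fun n => bern q' n j)); auto. intros; apply bern_ext; auto. Qed.

Lemma fpmf_T mu q i j : valid q -> fpmf mu q j = Tt (q i) (fun j => fpmf mu (upd q i 0) j) j.
Proof.
  intros Hv.
  assert (Hv0 : valid (upd q i 0)) by (apply valid_upd; auto; pose proof (proj1 Hv i); lra).
  rewrite fpmf_Cv by auto. rewrite (Cv_ext mu _ (Tt (q i) (bq (upd q i 0)))) by (intros; apply bq_T; auto).
  rewrite Cv_Tt. apply Tt_ext. intros; rewrite fpmf_Cv; auto.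
Qed.

Lemma eventually_lt (u v : nat -> R) (a b : R) : is_lim_seq u a -> is_lim_seq v b -> a < b ->
  eventually (fun n => u n < v n).
Proof.
  intros Hu Hv Hab. pose proof (is_lim_seq_minus' _ _ _ _ Hv Hu) as H.
  apply is_lim_seq_spec in H.
  assert (Hp : 0 < (b - a) / 2) by lra.
  destruct (H (mkposreal _ Hp)) as [N HN]. exists N. intros n Hn. specialize (HN n Hn). simpl in HN.
  apply Rabs_def2 in HN. lra.
Qed.

Lemma M_lim lam' p' m mu mu' q q' : valid p' ->
  fpmf lam' p' (S m) < fpmf lam' p' m -> 0 <= mu -> mu <= mu' -> mu' <= lam' ->
  (forall i, 0 <= q i <= q' i) -> (forall i, q' i <= p' i) -> ex_series q -> ex_series q' ->
  forall k, (m <= k)%nat -> fpmf mu q (S k) <= fpmf mu' q' (S k).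
Proof.
  intros Hv Hgap H1 H2 H3 Hq Hq' Hs Hs' k Hk.
  assert (Hvq : valid q) by (split; auto; intros i; specialize (Hq i); specialize (Hq' i); pose proof (proj1 Hv i); lra).
  assert (Hvq' : valid q') by (split; auto; intros i; specialize (Hq i); specialize (Hq' i); pose proof (proj1 Hv i); lra).
  destruct (eventually_lt _ _ _ _ (ftrunc_lim lam' p' (S m) Hv) (ftrunc_lim lam' p' m Hv) Hgap) as [N HN].
  assert (Hev : eventually (fun n => f_trunc mu q n (S k) <= f_trunc mu' q' n (S k))).
  { exists N. intros n Hn. rewrite !f_trunc_Cv. apply (M_n lam' p' n m); auto. apply Hv.
    rewrite <- !f_trunc_Cv. apply HN; auto. }
  exact (is_lim_seq_le_loc _ _ _ _ Hev (ftrunc_lim mu q (S k) Hvq) (ftrunc_lim mu' q' (S k) Hvq')).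
Qed.


Lemma decr_le (p : nat -> R) : (forall i, p (S i) <= p i) -> forall r k, (r <= k)%nat -> p k <= p r.
Proof. intros H r k Hk. induction Hk. lra. specialize (H m). lra. Qed.

Lemma Pg_pos_ex mu g k : nonneg g -> 0 < Pg mu g k -> exists j, (j <= k)%nat /\ 0 < g j.
Proof.
  intros Hn Hp. apply NNPP. intros Hne.
  assert (Hz : forall j, (j <= k)%nat -> g j = 0).
  { intros j Hj. destruct (Rlt_dec 0 (g j)). exfalso; apply Hne; eauto. specialize (Hn j). lra. }
  unfold Pg in Hp. rewrite (sum_eq _ (fun _ => 0)) in Hp. rewrite sum_cte in Hp. lra.
  intros i Hi. rewrite Hz; auto. ring.
Qed.

Lemma Pg_pos x g k j0 : 0 < x -> nonneg g -> (j0 <= k)%nat -> 0 < g j0 -> 0 < Pg x g k.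
Proof.
  intros Hx Hn Hj Hg. eapply Rlt_le_trans; [|apply (Pg_ge_term x g k j0); auto; lra].
  apply Rmult_lt_0_compat; auto. apply Rdiv_lt_0_compat. apply pow_lt; auto. apply INR_fact_pos.
Qed.

Lemma contig g a c : nonneg g -> SLC g -> 0 < g a -> (a < c)%nat -> g c = 0 -> forall d, (c <= d)%nat -> g d = 0.
Proof.
  intros Hn HS Ha Hac Hc d Hd. induction Hd; auto.
  assert (H := HS a m ltac:(lia)). rewrite IHHd in H. rewrite Rmult_0_r in H.
  specialize (Hn (S m)). nra.
Qed.

Lemma fpmf_ext mu q q' j : (forall x, q x = q' x) -> fpmf mu q j = fpmf mu q' j.
Proof.
  intros E. unfold fpmf. rewrite (Lim_seq_ext _ (fun n => f_trunc mu q' n j)); auto.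
  intros n. unfold f_trunc. apply sum_eq. intros; f_equal. apply bern_ext; auto.
Qed.

Definition zz (p' : nat -> R) (r : nat) : nat -> R := mix (fun _ => 0) p' r.

Lemma chain p' k0 j0 : valid p' -> (forall i, p' (S i) <= p' i) -> 0 < p' k0 -> (j0 <= k0)%nat ->
  0 < bq p' j0 -> 0 < bq p' (S k0).
Proof.
  intros Hv Hd Hk Hj Hb.
  assert (Hvz : forall r, valid (zz p' r)).
  { intros r. destruct Hv as [Hq Hs]. assert (Hr : forall x, 0 <= zz p' r x <= p' x).
    { intros x. unfold zz, mix. destruct (Nat.ltb x r). specialize (Hq x); lra. specialize (Hq x); lra. }
    split. intros x; specialize (Hr x); specialize (Hq x); lra. apply (ex_series_dom _ p'); auto. }
  assert (Hz0 : forall j, bq (zz p' 0) j = bq p' j) by (intros; apply bq_ext; intros; reflexivity).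
  assert (Tz : forall r j, bq (zz p' r) j = Tt (p' r) (bq (zz p' (S r))) j).
  { intros r j. rewrite (bq_T (zz p' r) r j (Hvz r)).
    replace (zz p' r r) with (p' r) by (unfold zz, mix; rewrite Nat.ltb_irrefl; auto).
    apply Tt_ext. intros x. apply bq_ext. intros y. unfold zz, mix, upd.
    destruct (Nat.eqb_spec y r); destruct (Nat.ltb_spec y r); destruct (Nat.ltb_spec y (S r)); auto; lia. }
  destruct (Rlt_dec 0 (bq p' (S k0))) as [|Hn]; auto. exfalso.
  assert (Hnn := bq_nonneg p' Hv).
  assert (HS0 : bq p' (S k0) = 0) by (specialize (Hnn (S k0)); lra).
  assert (Hc := contig (bq p') j0 (S k0) Hnn (bq_SLC p' Hv) Hb ltac:(lia) HS0).
  assert (C1 : forall r, (r <= S k0)%nat -> forall j, (S k0 <= j + r)%nat -> bq (zz p' r) j = 0).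
  { induction r; intros Hr j Hjr.
    - rewrite Hz0. apply Hc. lia.
    - assert (E := Tz r (S j)). rewrite (IHr ltac:(lia) (S j) ltac:(lia)) in E. unfold Tt in E. simpl sh in E.
      assert (Hpr : 0 < p' r) by (pose proof (decr_le p' Hd r k0 ltac:(lia)); lra).
      assert (Hpr1 : p' r <= 1) by apply (proj1 Hv r).
      pose proof (bq_nonneg _ (Hvz (S r)) (S j)). pose proof (bq_nonneg _ (Hvz (S r)) j).
      assert (0 <= (1 - p' r) * bq (zz p' (S r)) (S j)) by (apply Rmult_le_pos; lra).
      assert (0 <= p' r * bq (zz p' (S r)) j) by (apply Rmult_le_pos; lra).
      assert (p' r * bq (zz p' (S r)) j = 0) by lra.
      apply Rmult_integral in H3. destruct H3; lra. }
  assert (C2 : forall r, (r <= S k0)%nat -> forall j, bq (zz p' (S k0 - r)) j = 0).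
  { induction r; intros Hr j.
    - rewrite Nat.sub_0_r. apply C1; auto. lia.
    - rewrite Tz. replace (S (S k0 - S r)) with (S k0 - r)%nat by lia.
      unfold Tt. rewrite IHr by lia. destruct j; simpl; [ring|]. rewrite IHr by lia. ring. }
  specialize (C2 (S k0) (le_n _) j0). rewrite Nat.sub_diag, Hz0 in C2. lra.
Qed.

Theorem lemma2 (lam : R) (p : nat -> R) (lam' : R) (p' : nat -> R)
  (m k : nat) :
  in_nabla lam p -> in_nabla lam' p' ->
  (lam <> lam' \/ exists i, p i <> p' i) ->
  lam <= lam' -> (forall i, p i <= p' i) ->
  is_leading_mode lam' p' m ->
  (m < k)%nat ->
  lam' + p' (k - 1)%nat > 0 ->
  fpmf lam' p' k > fpmf lam p k.
Proof.
  intros Hn Hn' Hdist Hll Hpp [_ Hgap] Hmk Hpos.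
  destruct Hn as [Hl0 [Hp0 [Hpd [Hpn Hps]]]].
  destruct Hn' as [Hl0' [Hp0' [Hpd' [Hpn' Hps']]]].
  assert (Hv : valid p).
  { split; auto. intros i. split; auto. pose proof (decr_le p Hpd 0 i ltac:(lia)). lra. }
  assert (Hv' : valid p').
  { split; auto. intros i. split; auto. pose proof (decr_le p' Hpd' 0 i ltac:(lia)). lra. }
  destruct k as [|k0]; [lia|]. replace (S k0 - 1)%nat with k0 in Hpos by lia.
  assert (Hm : (m <= k0)%nat) by lia.
  set (b' := bq p').
  assert (HF : forall mu j, fpmf mu p' j = Cv mu b' j) by (intros; apply fpmf_Cv; auto).
  assert (Hb'n : nonneg b') by (apply bq_nonneg; auto).
  assert (Hb'S : SLC b') by (apply bq_SLC; auto).
  assert (Hgap' : fpmf lam' p' (S m) < fpmf lam' p' m) by exact Hgap.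
  assert (Hfm : 0 < fpmf lam' p' m).
  { pose proof (Cv_nonneg lam' b' (S m) Hl0' Hb'n). rewrite <- HF in H. lra. }
  assert (HPg : 0 < Pg lam' b' m).
  { rewrite HF in Hfm. unfold Cv in Hfm. pose proof (exp_pos (- lam')).
    apply Rmult_lt_reg_l with (exp (- lam')); auto. lra. }
  destruct (Pg_pos_ex lam' b' m Hb'n HPg) as [j0 [Hj0 Hbj0]].
  unfold Rgt.
  destruct (Req_dec lam lam') as [Heq|Hne].
  - subst lam.
    destruct Hdist as [H|[i0 Hi0]]; [contradiction|].
    assert (Hlt : p i0 < p' i0) by (specialize (Hpp i0); lra).
    set (q := upd p' i0 (p i0)).
    assert (Hvq : valid q) by (apply valid_upd; [exact Hv' | split; [apply Hpn|lra]]).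
    assert (S1 : fpmf lam' p (S k0) <= fpmf lam' q (S k0)).
    { apply (M_lim lam' p' m lam' lam' p q Hv' Hgap' Hl0' (Rle_refl _) (Rle_refl _)); auto.
      - intros i. unfold q, upd. destruct (Nat.eqb_spec i i0). subst; split; [apply Hpn|lra]. split; auto.
      - intros i. unfold q, upd. destruct (Nat.eqb_spec i i0). subst; lra. lra.
      - apply Hvq. }
    set (G := fun j => Cv lam' (bq (upd p' i0 0)) j).
    assert (Hv0 : valid (upd p' i0 0)) by (apply valid_upd; [exact Hv' | split; [lra|apply Hpn']]).
    assert (T1 : forall j, fpmf lam' p' j = Tt (p' i0) G j).
    { intros j. rewrite (fpmf_T lam' p' i0 j Hv'). apply Tt_ext. intros x. unfold G. apply fpmf_Cv; auto. }
    assert (T2 : forall j, fpmf lam' q j = Tt (p i0) G j).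
    { intros j. rewrite (fpmf_T lam' q i0 j Hvq). unfold q at 1. rewrite upd_eq. apply Tt_ext. intros x.
      unfold G. rewrite <- fpmf_Cv by auto. apply fpmf_ext. intros y. unfold q. apply upd_upd. }
    assert (HGn : nonneg G) by (intros j; apply Cv_nonneg; auto; apply bq_nonneg; auto).
    assert (HGS : SLC G) by (apply SLC_Cv; auto; [apply bq_nonneg | apply bq_SLC]; auto).
    assert (fpos : 0 < fpmf lam' p' (S k0)).
    { rewrite HF. destruct (Rlt_dec 0 lam') as [Hl|Hl].
      - unfold Cv. apply Rmult_lt_0_compat. apply exp_pos. apply (Pg_pos lam' b' (S k0) j0); auto. lia.
      - assert (lam' = 0) by lra. subst lam'. rewrite Cv_at0.
        apply (chain p' k0 j0); auto. lra. lia. }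
    assert (HG : G (S k0) < G k0).
    { destruct (Rlt_dec (G (S k0)) (G k0)) as [|Hc]; auto. exfalso. apply Rnot_lt_le in Hc.
      destruct (Rlt_dec 0 (G (S k0))) as [Hp|Hp].
      - assert (HN := U_lemma G k0 HGn HGS Hp Hc).
        assert (HN0 : ND (Tt 0 G) (S k0)) by (apply (ND_ext G); [intros; rewrite Tt_0; auto | auto]).
        assert (HN1 : ND (Tt (p' i0) G) (S k0)).
        { apply (ND_T G (S k0) 0 (p' i0)); auto. lra. apply Hv'. }
        assert (HN2 : ND (fun j => fpmf lam' p' j) (S k0)).
        { apply (ND_ext (Tt (p' i0) G)); [intros; rewrite T1; auto | exact HN1]. }
        specialize (HN2 (S m) ltac:(lia)). simpl in HN2. lra.
      - assert (G (S k0) = 0) by (specialize (HGn (S k0)); lra).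
        assert (G k0 = 0) by (specialize (HGn k0); lra).
        rewrite T1 in fpos. unfold Tt in fpos. simpl in fpos. rewrite H, H0 in fpos. lra. }
    assert (S2 : fpmf lam' q (S k0) < fpmf lam' p' (S k0)).
    { rewrite T1, T2. unfold Tt. simpl sh. nra. }
    lra.
  - assert (Hlt : lam < lam') by lra.
    set (c0 := (lam + lam') / 2).
    assert (S1 : fpmf lam p (S k0) <= fpmf c0 p' (S k0)).
    { apply (M_lim lam' p' m lam c0 p p' Hv' Hgap' Hl0);
        [unfold c0; lra | unfold c0; lra | intros i; split; auto | intros; lra | apply Hv | apply Hv' | exact Hm]. }
    assert (S2 : fpmf c0 p' (S k0) < fpmf lam' p' (S k0)).
    { rewrite !HF.
      apply (smono_deriv (fun x => Cv x b' (S k0)) (fun x => sh (fun k => Cv x b' k) (S k0) - Cv x b' (S k0)));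
        [intros; apply Cv_deriv | | unfold c0; lra].
      intros x Hx. simpl sh.
      assert (Hx0 : 0 < x) by (unfold c0 in Hx; lra).
      destruct (Rlt_dec (Cv x b' (S k0)) (Cv x b' k0)) as [|Hc]; [lra|]. exfalso. apply Rnot_lt_le in Hc.
      assert (Hk0 : 0 < Cv x b' k0).
      { unfold Cv. apply Rmult_lt_0_compat. apply exp_pos. apply (Pg_pos x b' k0 j0); auto. lia. }
      assert (HN := U_lemma (fun j => Cv x b' j) k0 (fun j => Cv_nonneg x b' j ltac:(lra) Hb'n)
                      (SLC_Cv x b' ltac:(lra) Hb'n Hb'S) ltac:(lra) Hc).
      apply (ND_le _ (S k0) (S m)) in HN; [|lia].
      apply (ND_Cv_mono x lam') in HN; [|lra].
      specialize (HN (S m) (le_n _)). simpl in HN. rewrite !HF in Hgap'. lra. }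
    lra.
Qed.
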